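(* Let $K$ be a field of characteristic $0$, let $S=K[x_1,\ldots,x_n]$ be graded by $\deg x_i=a_i>0$, and let $I\subset S$ be a homogeneous ideal. Suppose that $(I^{(k-1)})^2\subseteq I^k$ for some $k\ge2$. Then every homogeneous ideal $J$ with $I^k\subseteq J\subseteq I^{(k)}$ is strongly Golod, i.e. $\partial(J)^2\subseteq J$, where $\partial(J)$ is the ideal generated by all $\partial f/\partial x_i$ with $f\in J$, $1\le i\le n$. In particular, any homogeneous ideal $J$ with $I^2\subseteq J\subseteq I^{(2)}$ is strongly Golod.
   Context: The $m$-th symbolic power is $I^{(m)}=\bigcup_{t\ge1} I^m:L^t$, where $L$ is the intersection of all associated, non-minimal prime ideals of $I^m$. *)

(* Defs.v *)
From mathcomp Require Import all_boot all_algebra.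
From mathcomp Require Import mpoly.
Set Implicit Arguments. Unset Strict Implicit. Unset Printing Implicit Defensive.
Import GRing.Theory.
Local Open Scope ring_scope.

Section IdealDefs.
Variable R : comNzRingType.

Definition is_ideal (I : R -> Prop) : Prop :=
  [/\ I 0, (forall a b, I a -> I b -> I (a + b)) & (forall r a, I a -> I (r * a))].

Definition subid (I J : R -> Prop) : Prop := forall f, I f -> J f.

Definition gen (A : R -> Prop) : R -> Prop :=
  fun f => forall J, is_ideal J -> subid A J -> J f.

Definition idmul (I J : R -> Prop) : R -> Prop :=
  gen (fun h => exists a b, [/\ I a, J b & h = a * b]).

Fixpoint idpow (I : R -> Prop) (m : nat) : R -> Prop :=
  match m with
  | O => fun _ => True
  | S m' => idmul I (idpow I m')
  end.

Definition colon (I J : R -> Prop) : R -> Prop :=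
  fun f => forall g, J g -> I (f * g).

Definition is_prime (P : R -> Prop) : Prop :=
  [/\ is_ideal P, ~ P 1 & forall a b, P (a * b) -> P a \/ P b].

Definition associated_prime (I P : R -> Prop) : Prop :=
  is_prime P /\ exists f, forall g, P g <-> I (f * g).

Definition minimal_prime (I P : R -> Prop) : Prop :=
  [/\ is_prime P, subid I P &
      forall Q, is_prime Q -> subid I Q -> subid Q P -> subid P Q].

Definition embedded_int (I : R -> Prop) (m : nat) : R -> Prop :=
  fun f => forall P, associated_prime (idpow I m) P ->
                     ~ minimal_prime (idpow I m) P -> P f.

Definition symbolic_power (I : R -> Prop) (m : nat) : R -> Prop :=
  fun f => exists2 t : nat, (1 <= t)%N &
           colon (idpow I m) (idpow (embedded_int I m) t) f.

End IdealDefs.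

Section Graded.
Variables (K : fieldType) (n : nat) (a : 'I_n -> nat).

Definition wdeg (m : 'X_{1..n}) : nat := (\sum_(i < n) a i * m i)%N.

Definition whomog (p : {mpoly K[n]}) : Prop :=
  forall m1 m2, m1 \in msupp p -> m2 \in msupp p -> wdeg m1 = wdeg m2.

Definition homog_ideal (I : {mpoly K[n]} -> Prop) : Prop :=
  is_ideal I /\ subid I (gen (fun g => I g /\ whomog g)).

End Graded.

Definition deriv_ideal (K : fieldType) (n : nat) (J : {mpoly K[n]} -> Prop)
  : {mpoly K[n]} -> Prop :=
  gen (fun h => exists f i, J f /\ h = mderiv i f).

Definition strongly_golod (K : fieldType) (n : nat) (J : {mpoly K[n]} -> Prop)
  : Prop := subid (idpow (deriv_ideal J) 2) J.

(* Main.v *)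
Require Import Defs.
From mathcomp Require Import all_boot all_order all_algebra.
From mathcomp Require Import mpoly.
From mathcomp Require Import ring.
From Stdlib Require Import ClassicalEpsilon.
From Stdlib Require List.
Set Implicit Arguments. Unset Strict Implicit. Unset Printing Implicit Defensive.
Import Order.TTheory GRing.Theory.
Local Open Scope ring_scope.

Section Ideals.
Variable R : comNzRingType.
Implicit Types X Y Z Q P M A : R -> Prop.

Lemma gen_min A X : is_ideal X -> subid A X -> subid (gen A) X.
Proof. by move=> hX hA f; apply. Qed.

Lemma gen_sub A : subid A (gen A).
Proof. by move=> f Af J _; apply. Qed.

Lemma gen_ideal A : is_ideal (gen A).
Proof.
split.
- by move=> J [? ? ?] _.
- by move=> a b ha hb J hJ hAJ; case: (hJ) => _ hD _; apply: hD; [apply: ha|apply: hb].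
- by move=> r x hx J hJ hAJ; case: (hJ) => _ _ hM; apply: hM; apply: hx.
Qed.

Lemma id0 X : is_ideal X -> X 0. Proof. by case. Qed.
Lemma idD X a b : is_ideal X -> X a -> X b -> X (a + b). Proof. by case=> _ h _; apply: h. Qed.
Lemma idM X r a : is_ideal X -> X a -> X (r * a). Proof. by case=> _ _ h; apply: h. Qed.
Lemma idMr X r a : is_ideal X -> X a -> X (a * r).
Proof. by move=> hX ha; rewrite mulrC; apply: idM. Qed.
Lemma idN X a : is_ideal X -> X a -> X (- a).
Proof. by move=> hX ha; rewrite -mulN1r; apply: idM. Qed.
Lemma idB X a b : is_ideal X -> X a -> X b -> X (a - b).
Proof. by move=> hX ha hb; apply: idD => //; apply: idN. Qed.
Lemma idsum X (I : Type) (s : seq I) (P : pred I) (F : I -> R) :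
  is_ideal X -> (forall i, P i -> X (F i)) -> X (\sum_(i <- s | P i) F i).
Proof. move=> hX hF; apply: (big_ind X (id0 hX) (fun a b => @idD X a b hX)) => //. Qed.
Lemma idMn X a k : is_ideal X -> X a -> X (a *+ k).
Proof. by move=> hX ha; rewrite -mulr_natl; apply: idM. Qed.
Lemma idT : is_ideal (fun _ : R => True). Proof. by []. Qed.
Lemma id_one X x : is_ideal X -> X 1 -> X x.
Proof. by move=> hX h1; rewrite -(mulr1 x); apply: idM. Qed.

Lemma idmul_ideal X Y : is_ideal (idmul X Y). Proof. exact: gen_ideal. Qed.
Lemma idpow_ideal X m : is_ideal (idpow X m).
Proof. by case: m => [|m] //=; exact: idmul_ideal. Qed.
Lemma idmulP X Y a b : X a -> Y b -> idmul X Y (a * b).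
Proof. by move=> ha hb; apply: gen_sub; exists a, b. Qed.
Lemma idmul_min X Y Z : is_ideal Z -> (forall a b, X a -> Y b -> Z (a * b)) ->
  subid (idmul X Y) Z.
Proof. by move=> hZ h; apply: gen_min => // f [a [b [ha hb ->]]]; apply: h. Qed.
Lemma idmul_subl X Y : is_ideal X -> subid (idmul X Y) X.
Proof. by move=> hX; apply: idmul_min => // a b ha _; apply: idMr. Qed.
Lemma idmul_subr X Y : is_ideal Y -> subid (idmul X Y) Y.
Proof. by move=> hY; apply: idmul_min => // a b _ hb; apply: idM. Qed.
Lemma idpow_dec X m : is_ideal X -> subid (idpow X m.+1) (idpow X m).
Proof. by move=> hX; apply: idmul_subr; apply: idpow_ideal. Qed.
Lemma idpow_decn X m m' : is_ideal X -> (m <= m')%N -> subid (idpow X m') (idpow X m).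
Proof.
move=> hX; elim: m' => [|m' IH]; first by rewrite leqn0 => /eqP ->.
rewrite leq_eqVlt => /orP [/eqP -> //| hm] f hf.
by apply: IH => //; apply: idpow_dec.
Qed.
Lemma idpow_mono X Y m : subid X Y -> subid (idpow X m) (idpow Y m).
Proof.
move=> hXY; elim: m => [|m IH] //=.
apply: idmul_min; first exact: idmul_ideal.
by move=> a b ha hb; apply: idmulP; [apply: hXY|apply: IH].
Qed.
Lemma idpow1 X : is_ideal X -> subid (idpow X 1) X.
Proof. by move=> hX; apply: idmul_subl. Qed.
Lemma idpow_sub1 X m : is_ideal X -> (1 <= m)%N -> subid (idpow X m) X.
Proof. by move=> hX hm f hf; apply: idpow1 => //; apply: (idpow_decn hX hm). Qed.
Lemma idpow_elt X x m : X x -> idpow X m (x ^+ m).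
Proof. by move=> hx; elim: m => [|m IH] //=; rewrite exprS; apply: idmulP. Qed.
Lemma idX X x m : is_ideal X -> X x -> (1 <= m)%N -> X (x ^+ m).
Proof. by move=> hX hx hm; case: m hm => // m _; rewrite exprS; apply: idMr. Qed.

End Ideals.


Section Ideals2.
Variable R : comNzRingType.
Implicit Types X Y Z Q P M A : R -> Prop.

Lemma colw_ideal X w : is_ideal X -> is_ideal (fun u => X (u * w)).
Proof.
move=> hX; split; first by rewrite mul0r; apply: id0.
- by move=> a b ha hb; rewrite mulrDl; apply: idD.
- by move=> r a ha; rewrite -mulrA; apply: idM.
Qed.
Lemma colwl_ideal X w : is_ideal X -> is_ideal (fun u => X (w * u)).
Proof.
move=> hX; have := colw_ideal w hX.
case=> h0 hD hM; split; first by rewrite mulr0; apply: id0.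
- by move=> a b ha hb; rewrite mulrDr; apply: idD.
- by move=> r a ha; rewrite mulrCA; apply: idM.
Qed.

Definition sumid Y Z := gen (fun x => Y x \/ Z x).

Lemma sumid_min Y Z X : is_ideal X -> subid Y X -> subid Z X -> subid (sumid Y Z) X.
Proof. by move=> hX hY hZ; apply: gen_min => // x [/hY|/hZ]. Qed.
Lemma sumidl Y Z : subid Y (sumid Y Z). Proof. by move=> x hx; apply: gen_sub; left. Qed.
Lemma sumidr Y Z : subid Z (sumid Y Z). Proof. by move=> x hx; apply: gen_sub; right. Qed.

Lemma pow_sum Y Z : is_ideal Y -> is_ideal Z -> forall a b,
  subid (idpow (sumid Y Z) (a + b)) (sumid (idpow Y a) (idpow Z b)).
Proof.
move=> hY hZ a b; move hn: (a + b)%N => n; elim: n a b hn => [|n IH] a b hn x hx.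
  by move: hn => /eqP; rewrite addn_eq0 => /andP [/eqP -> _]; apply: sumidl.
case: a hn => [|a] hn; first by apply: sumidl.
case: b hn => [|b] hn; first by apply: sumidr.
have hS := @gen_ideal R (fun x => idpow Y a.+1 x \/ idpow Z b.+1 x).
move: hx; apply: idmul_min => // u w hu hw.
have hw1 : sumid (idpow Y a) (idpow Z b.+1) w by apply: IH => //; move: hn; rewrite addSn => -[].
have hw2 : sumid (idpow Y a.+1) (idpow Z b) w by apply: IH => //; move: hn; rewrite addnS => -[].
set S := sumid (idpow Y a.+1) (idpow Z b.+1).
suff hT : subid (sumid Y Z) (fun u => S (u * w)) by apply: hT.
apply: sumid_min; first exact: colw_ideal.
- move=> y hy.
  suff hT : subid (sumid (idpow Y a) (idpow Z b.+1)) (fun w => S (y * w)) by apply: hT.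
  apply: sumid_min; first exact: colwl_ideal.
  + by move=> v hv; apply: sumidl; apply: idmulP.
  + by move=> v hv; apply: sumidr; apply: (idM _ (idpow_ideal Z b.+1)).
- move=> z hz.
  suff hT : subid (sumid (idpow Y a.+1) (idpow Z b)) (fun w => S (z * w)) by apply: hT.
  apply: sumid_min; first exact: colwl_ideal.
  + by move=> v hv; apply: sumidl; apply: (idM _ (idpow_ideal Y a.+1)).
  + by move=> v hv; apply: sumidr; apply: idmulP.
Qed.

Lemma powgen1 (g : R) m : subid (idpow (gen (fun x => x = g)) m) (gen (fun x => x = g ^+ m)).
Proof.
elim: m => [|m IH] x hx.
  by rewrite -(mulr1 x); apply: (idM _ (gen_ideal _)); apply: gen_sub; rewrite expr0.
move: hx; apply: idmul_min; first exact: gen_ideal.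
move=> u w hu /IH hw; move: u hu; apply: gen_min; first exact/colw_ideal/gen_ideal.
move=> u ->; move: w hw; apply: gen_min; first exact/colwl_ideal/gen_ideal.
by move=> w ->; apply: gen_sub; rewrite exprS.
Qed.

Definition radi Q : R -> Prop := fun x => exists m, Q (x ^+ m).

Lemma gen_pow Q (gs : seq R) : is_ideal Q -> (forall g, g \in gs -> radi Q g) ->
  exists e, subid (idpow (gen (fun x => x \in gs)) e) Q.
Proof.
move=> hQ; elim: gs => [|g gs IH] hgs.
  exists 1%N => x /(idpow1 (gen_ideal _)); apply: gen_min => //.
have [e he] : exists e, subid (idpow (gen (fun x => x \in gs)) e) Q.
  by apply: IH => h hh; apply: hgs; rewrite inE hh orbT.
have [m hm] := hgs g (mem_head _ _).
exists (m + e)%N => x hx.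
have hx' : idpow (sumid (gen (fun x => x = g)) (gen (fun x => x \in gs))) (m + e) x.
  move: x hx; apply: idpow_mono; apply: gen_min; first exact: gen_ideal.
  move=> y; rewrite inE => /orP [/eqP ->|hy].
    by apply: sumidl; apply: gen_sub.
  by apply: sumidr; apply: gen_sub.
move: (pow_sum (gen_ideal _) (gen_ideal _) hx'); apply: sumid_min => //.
by move=> y /powgen1; apply: gen_min => // z ->.
Qed.

Definition primary Q :=
  [/\ is_ideal Q, ~ Q 1 & forall x y, Q (x * y) -> Q x \/ exists m, Q (y ^+ m)].

Lemma rad_ideal Q : is_ideal Q -> is_ideal (radi Q).
Proof.
move=> hQ; split.
- by exists 1%N; rewrite expr1; apply: id0.
- move=> a b [m hm] [m' hm']; exists (m + m')%N; rewrite exprDn.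
  apply: idsum => // i _; apply: idMn => //.
  case: (leqP m' i) => hi.
    by rewrite -(subnK hi) exprD mulrA; apply: (idM _ hQ).
  have : (m <= m + m' - i)%N by rewrite -addnBA ?leq_addr // ltnW.
  by move=> h; rewrite -(subnK h) exprD mulrAC; apply: (idM _ hQ).
- by move=> r a [m hm]; exists m; rewrite exprMn; apply: (idM _ hQ).
Qed.

Lemma rad_sub Q : subid Q (radi Q). Proof. by move=> x hx; exists 1%N; rewrite expr1. Qed.

Lemma rad_prime Q : primary Q -> is_prime (radi Q).
Proof.
case=> hQ h1 hp; split; first exact: rad_ideal.
- by case=> m; rewrite expr1n.
- move=> a b [m]; rewrite exprMn => /hp [ha|[m' hb]].
    by left; exists m.
  by right; exists (m * m')%N; rewrite exprM.
Qed.

Lemma primary_colon Q g z : primary Q -> ~ Q g -> Q (z * g) -> radi Q z.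
Proof. by case=> _ _ hp hg; rewrite mulrC => /hp [|]. Qed.

End Ideals2.


Definition noeth (R : comNzRingType) := forall X : R -> Prop, is_ideal X -> exists gs : seq R,
  (forall g, g \in gs -> X g) /\ subid X (gen (fun g => g \in gs)).

Section Noeth.
Variable R : comNzRingType.
Hypothesis hN : noeth R.
Implicit Types X Y Z Q P M A B : R -> Prop.

Lemma noeth_acc (C : nat -> R -> Prop) :
  (forall i, is_ideal (C i)) -> (forall i, subid (C i) (C i.+1)) ->
  exists N, forall m, subid (C m) (C N).
Proof.
move=> hC hS.
have mono : forall i j, (i <= j)%N -> subid (C i) (C j).
  move=> i j; elim: j => [|j IH]; first by rewrite leqn0 => /eqP ->.
  by rewrite leq_eqVlt => /orP [/eqP -> //|/IH h] x /h /hS.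
set U := fun x => exists i, C i x.
have hU : is_ideal U.
  split; first by exists 0%N; apply: id0.
  - move=> a b [i ha] [j hb]; exists (maxn i j); apply: idD => //.
    + by apply: (mono i) => //; apply: leq_maxl.
    + by apply: (mono j) => //; apply: leq_maxr.
  - by move=> r a [i ha]; exists i; apply: idM.
have [gs [hgs hsub]] := hN hU.
have [N hN'] : exists N, forall g, g \in gs -> C N g.
  elim: gs {hsub} hgs => [|g gs IH] hgs; first by exists 0%N.
  have [N hN'] : exists N, forall g, g \in gs -> C N g.
    by apply: IH => h hh; apply: hgs; rewrite inE hh orbT.
  have [i hi] := hgs g (mem_head _ _).
  exists (maxn N i) => h; rewrite inE => /orP [/eqP ->|hh].
    by apply: (mono i) => //; apply: leq_maxr.
  by apply: (mono N); [apply: leq_maxl|apply: hN'].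
exists N => m x hx; apply: (gen_min (hC N) hN'); apply: hsub; by exists m.
Qed.

Lemma noeth_max (F : (R -> Prop) -> Prop) X0 : is_ideal X0 -> F X0 ->
  exists X, [/\ is_ideal X, F X & forall Y, is_ideal Y -> F Y -> subid X Y -> subid Y X].
Proof.
move=> h0 hF0; case: (classic (exists X, [/\ is_ideal X, F X &
   forall Y, is_ideal Y -> F Y -> subid X Y -> subid Y X])) => // hno.
have step : forall X, exists Y, (is_ideal X /\ F X) ->
    [/\ is_ideal Y /\ F Y, subid X Y & ~ subid Y X].
  move=> X; case: (classic (is_ideal X /\ F X)) => h; last by exists X.
  case: (classic (exists Y, [/\ is_ideal Y /\ F Y, subid X Y & ~ subid Y X])) => [[Y hY]|hY].
    by exists Y.
  exfalso; apply: hno; exists X; case: h => hX hFX; split => // Y hYi hFY hXY.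
  by apply: NNPP => hn; apply: hY; exists Y.
pose nxt X := proj1_sig (constructive_indefinite_description _ (step X)).
have hnxt X : (is_ideal X /\ F X) ->
    [/\ is_ideal (nxt X) /\ F (nxt X), subid X (nxt X) & ~ subid (nxt X) X].
  exact: (proj2_sig (constructive_indefinite_description _ (step X))).
pose C := fix C i := match i with 0%N => X0 | i'.+1 => nxt (C i') end.
have inv : forall i, is_ideal (C i) /\ F (C i).
  elim=> [|i IH]; first by split.
  have [h _ _] := hnxt (C i) IH; exact: h.
have [N hN'] := noeth_acc (fun i => proj1 (inv i)) (fun i => let: And3 _ h _ := hnxt _ (inv i) in h).
exfalso; have [_ _ hn] := hnxt _ (inv N); apply: hn => x hx; exact: (hN' N.+1).
Qed.

Definition irred Q := [/\ is_ideal Q, ~ Q 1 & forall A B, is_ideal A -> is_ideal B ->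
  subid Q A -> subid Q B -> (forall x, A x -> B x -> Q x) -> subid A Q \/ subid B Q].

Definition decomposable M (T : (R -> Prop) -> Prop) := exists Qs : seq (R -> Prop),
  (forall Q, List.In Q Qs -> T Q) /\ (forall x, M x <-> forall Q, List.In Q Qs -> Q x).

Lemma decomp_irred M : is_ideal M -> decomposable M irred.
Proof.
move=> hM; apply: NNPP => hnd.
have [X [hX hFX hmax]] := noeth_max (F := fun X => ~ decomposable X irred) hM hnd.
case: (classic (X 1)) => h1.
  by apply: hFX; exists [::]; split => // x; split => // _; apply: id_one.
case: (classic (irred X)) => hirr.
  apply: hFX; exists [:: X]; split; first by move=> Q [<-|].
  by move=> x; split; [move=> hx Q [<-|]|move=> h; apply: h; left].
have [A [B [[hA hB [hXA hXB hAB]] [nA nB]]]] : exists A B, [/\ is_ideal A, is_ideal B &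
    [/\ subid X A, subid X B & forall x, A x -> B x -> X x]] /\ ~ subid A X /\ ~ subid B X.
  apply: NNPP => hn; apply: hirr; split => // A B hA hB hXA hXB hAB.
  apply: NNPP => hn2; apply: hn; exists A, B; split => //; split.
  - by move=> h; apply: hn2; left.
  - by move=> h; apply: hn2; right.
have dA : decomposable A irred.
  by apply: NNPP => hd; apply: nA; apply: hmax.
have dB : decomposable B irred.
  by apply: NNPP => hd; apply: nB; apply: hmax.
case: dA => QA [hQA eA]; case: dB => QB [hQB eB].
apply: hFX; exists (QA ++ QB); split.
  by move=> Q /List.in_app_iff [/hQA|/hQB].
move=> x; split.
  move=> hx Q /List.in_app_iff [hq|hq].
    by move: Q hq; apply/eA; apply: hXA.
  by move: Q hq; apply/eB; apply: hXB.
move=> h; apply: hAB; [apply/eA|apply/eB] => Q hq; apply: h; apply/List.in_app_iff; by [left|right].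
Qed.

Lemma sumid1P Q u w : is_ideal Q -> sumid Q (fun z => z = u) w ->
  exists q r, Q q /\ w = q + r * u.
Proof.
move=> hQ; apply: (@gen_min _ _ (fun w => exists q r, Q q /\ w = q + r * u)).
- split; first by exists 0, 0; rewrite mul0r addr0; split => //; apply: id0.
  + move=> a b [q [r [hq ->]]] [q' [r' [hq' ->]]]; exists (q + q'), (r + r').
    by split; [apply: idD|rewrite mulrDl addrACA].
  + move=> c a [q [r [hq ->]]]; exists (c * q), (c * r).
    by split; [apply: idM|rewrite mulrDr mulrA].
- move=> z [hz|->]; first by exists z, 0; rewrite mul0r addr0.
  by exists 0, 1; rewrite mul1r add0r; split => //; apply: id0.
Qed.

Lemma irred_primary Q : irred Q -> primary Q.
Proof.
case=> hQ h1 hirr; split => // x y hxy.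
case: (classic (Q x)) => hx; [by left|right].
pose C t := fun z => Q (z * y ^+ t).
have hinc : forall t, subid (C t) (C t.+1).
  by move=> t z hz; rewrite /C exprS mulrCA; apply: (idM _ hQ).
have [N hNC] := noeth_acc (C := C) (fun t => colw_ideal _ hQ) hinc.
have hAB : forall w, sumid Q (fun z => z = y ^+ N) w -> sumid Q (fun z => z = x) w -> Q w.
  move=> w /(sumid1P hQ) [q [r [hq ->]]] /(sumid1P hQ) [q' [r' [hq' hw]]].
  have h2 : Q ((q + r * y ^+ N) * y).
    by rewrite hw mulrDl -mulrA; apply: (idD hQ); [apply: (idMr _ hQ)|apply: (idM _ hQ)].
  have h3 : Q (r * y ^+ N.+1).
    have -> : r * y ^+ N.+1 = (q + r * y ^+ N) * y - q * y by rewrite mulrDl addrC addKr exprSr mulrA.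
    by apply: (idB hQ) => //; apply: (idMr _ hQ).
  by apply: (idD hQ) => //; apply: (hNC N.+1).
have [h|h] := hirr (sumid Q (fun z => z = y ^+ N)) (sumid Q (fun z => z = x))
   (gen_ideal _) (gen_ideal _) (@sumidl _ _ _) (@sumidl _ _ _) hAB.
- by exists N; apply: h; apply: sumidr.
- by exfalso; apply: hx; apply: h; apply: sumidr.
Qed.

Lemma decomp_primary M : is_ideal M -> decomposable M (@primary R).
Proof.
by case/decomp_irred => Qs [h1 h2]; exists Qs; split => // Q /h1; apply: irred_primary.
Qed.

Lemma rad_pow Q : is_ideal Q -> exists e, subid (idpow (radi Q) e) Q.
Proof.
move=> hQ; have [gs [hgs hsub]] := hN (rad_ideal hQ).
have [e he] := gen_pow hQ hgs.
by exists e => x hx; apply: he; move: x hx; apply: idpow_mono.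
Qed.

End Noeth.


Section Char.
Variable R : comNzRingType.
Implicit Types X Y Z Q P M A B E : R -> Prop.

Definition emb M : R -> Prop :=
  fun f => forall P, associated_prime M P -> ~ minimal_prime M P -> P f.
Definition Sym M : R -> Prop :=
  fun f => forall P, minimal_prime M P -> exists2 s, ~ P s & M (s * f).
Definition irredundant (Qs : seq (R -> Prop)) := forall l1 Q l2, Qs = l1 ++ Q :: l2 ->
   exists x, ~ Q x /\ forall Q', List.In Q' (l1 ++ l2) -> Q' x.

Lemma in_split_iff Q Q' l1 l2 :
  List.In Q' (l1 ++ Q :: l2) <-> Q = Q' \/ List.In Q' (l1 ++ l2).
Proof. rewrite !List.in_app_iff /=; tauto. Qed.

Lemma primary_ideal Q : primary Q -> is_ideal Q. Proof. by case. Qed.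
Lemma prime_ideal P : is_prime P -> is_ideal P. Proof. by case. Qed.

Lemma make_irred n (Qs : seq (R -> Prop)) : (size Qs <= n)%N ->
  (forall Q, List.In Q Qs -> primary Q) ->
  exists Qs' : seq (R -> Prop), [/\ (forall Q, List.In Q Qs' -> primary Q),
    (forall x, (forall Q, List.In Q Qs -> Q x) <-> (forall Q, List.In Q Qs' -> Q x))
    & irredundant Qs'].
Proof.
elim: n Qs => [|n IH] Qs hs hp.
  case: Qs hs hp => // _ hp; exists [::]; split => // l1 Q l2.
  by case: l1.
case: (classic (exists l1 Q l2, Qs = l1 ++ Q :: l2 /\
    forall x, (forall Q', List.In Q' (l1 ++ l2) -> Q' x) -> Q x)) => [[l1 [Q [l2 [eQs hr]]]]|hno].
  have hs' : (size (l1 ++ l2) <= n)%N.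
    by move: hs; rewrite eQs !size_cat /= addnS ltnS.
  have [Qs' [h1 h2 h3]] := IH _ hs' (fun Q' hQ' => hp Q' (ltac:(rewrite eQs; exact: (proj2 (in_split_iff _ _ _ _) (or_intror hQ'))))).
  exists Qs'; split => // x; rewrite -h2; split.
    by move=> h Q' hQ'; apply: h; rewrite eQs; apply/in_split_iff; right.
  move=> h Q'; rewrite eQs => /in_split_iff [<-|]; last exact: h.
  exact: hr.
exists Qs; split => // l1 Q l2 eQs.
apply: NNPP => hn; apply: hno; exists l1, Q, l2; split => // x hx.
apply: NNPP => hQx; apply: hn; by exists x.
Qed.

Lemma last_false (A : nat -> Prop) e : ~ A 0%N -> A e -> exists i, ~ A i /\ A i.+1.
Proof.
move=> h0; elim: e => [//|e IH] he.
case: (classic (A e)) => hAe; [exact: IH|by exists e].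
Qed.

Lemma comp_assoc M (Qs : seq (R -> Prop)) l1 Q l2 x : noeth R ->
  (forall y, M y <-> forall Q', List.In Q' Qs -> Q' y) ->
  (forall Q', List.In Q' Qs -> is_ideal Q') -> primary Q -> Qs = l1 ++ Q :: l2 ->
  ~ Q x -> (forall Q', List.In Q' (l1 ++ l2) -> Q' x) ->
  associated_prime M (radi Q).
Proof.
move=> hN hM hid hQ eQs nx hx; split; first exact: rad_prime.
have hQi := primary_ideal hQ.
have [e he] := rad_pow hN hQi.
pose A i := forall p, idpow (radi Q) i p -> Q (x * p).
have A0 : ~ A 0%N by move=> h; apply: nx; rewrite -(mulr1 x); apply: h.
have Ae : A e by move=> p /he hp; apply: (idM _ hQi).
have [i [nAi Ai1]] := last_false A0 Ae.
have [p [hp nxp]] : exists p, idpow (radi Q) i p /\ ~ Q (x * p).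
  apply: NNPP => h; apply: nAi => p hp; apply: NNPP => hq; apply: h; by exists p.
exists (x * p) => g; split.
- move=> hg; apply/hM => Q'; rewrite eQs => /in_split_iff [<-|hQ'].
    by rewrite -mulrA; apply: Ai1; rewrite mulrC; apply: idmulP.
  rewrite -mulrA; apply: (idMr _ (hid Q' _)); last exact: hx.
  by rewrite eQs; apply/in_split_iff; right.
- move=> /hM h; apply: (primary_colon hQ nxp); rewrite mulrC; apply: h.
  by rewrite eQs; apply/in_split_iff; left.
Qed.

Lemma prime_pow P x m : is_prime P -> P (x ^+ m) -> P x.
Proof.
case=> hPi h1 hp; elim: m => [|m IH]; first by rewrite expr0 => /h1.
by rewrite exprS => /hp [|/IH].
Qed.

Lemma prod_avoid P (Qs : seq (R -> Prop)) (T : (R -> Prop) -> Prop) (G : (R -> Prop) -> R -> Prop) :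
  is_prime P -> (forall Q, List.In Q Qs -> T Q -> is_ideal (G Q)) ->
  (forall Q, List.In Q Qs -> T Q -> exists2 w, G Q w & ~ P w) ->
  exists z, ~ P z /\ forall Q, List.In Q Qs -> T Q -> G Q z.
Proof.
move=> hP; elim: Qs => [|Q Qs IH] hid hw.
  by exists 1; split => //; case: hP.
have [z [nz hz]] := IH (fun Q' h => hid Q' (or_intror h)) (fun Q' h => hw Q' (or_intror h)).
case: (classic (T Q)) => hTQ.
  have [w hw1 nw] := hw Q (or_introl erefl) hTQ.
  exists (w * z); split.
    by case: hP => _ _ hp /hp [].
  move=> Q' [<-|hQ'] hT.
    by apply: (idMr _ (hid Q (or_introl erefl) hTQ)).
  by apply: (idM _ (hid Q' (or_intror hQ') hT)); apply: hz.
exists z; split => // Q' [<-|hQ'] hT //; exact: hz.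
Qed.

Lemma min_transfer M P E : minimal_prime M P -> is_prime E -> subid M E -> subid E P ->
  minimal_prime M E.
Proof.
case=> hP hMP hmin hE hME hEP; split => // Q hQ hMQ hQE x hx.
by apply: (hmin Q hQ hMQ) => //; [move=> y /hQE /hEP|apply: hEP].
Qed.

Lemma assoc_sup M P : is_ideal M -> associated_prime M P -> subid M P.
Proof. by move=> hM [_ [g hg]] x hx; apply/hg; apply: idM. Qed.

Theorem char1 M f : noeth R -> is_ideal M ->
  (exists2 t, (1 <= t)%N & colon M (idpow (emb M) t) f) -> Sym M f.
Proof.
move=> hN hM [t ht hf] P hP.
have [Qs [hQs hMQ]] := decomp_primary hN hM.
have hPp : is_prime P by case: hP.
have [z [nz hz]] := @prod_avoid P Qs (fun Q => ~ subid (radi Q) P) (@radi R) hPp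
   (fun Q hQ _ => rad_ideal (primary_ideal (hQs Q hQ))) 
   (fun Q hQ hn => ltac:(apply: NNPP => h; apply: hn => w hw; apply: NNPP => hw'; apply: h; by exists w)).
have zL : emb M z.
  move=> E [hE [g hg]] hnm.
  have [Q0 [hQ0 ng0 hsub0]] : exists Q0, [/\ List.In Q0 Qs, ~ Q0 g & subid (radi Q0) E].
    apply: NNPP => hno.
    have hw0 : forall Q, List.In Q Qs -> ~ Q g -> exists2 w, Q w & ~ E w.
      move=> Q hQ ng.
      have hs : ~ subid (radi Q) E by move=> hs; apply: hno; exists Q; split.
      have [y [[m hm] ny]] : exists y, radi Q y /\ ~ E y.
        apply: NNPP => h; apply: hs => y hy; apply: NNPP => ny; apply: h; by exists y.
      exists (y ^+ m) => // hy; apply: ny; exact: (prime_pow hE hy).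
    have [w [nw hw]] := @prod_avoid E Qs (fun Q => ~ Q g) (fun Q => Q) hE
      (fun Q hQ _ => primary_ideal (hQs Q hQ)) hw0.
    apply: nw; apply/hg; apply/hMQ => Q hQ.
    case: (classic (Q g)) => hQg.
      by apply: (idMr _ (primary_ideal (hQs Q hQ))).
    by apply: (idM _ (primary_ideal (hQs Q hQ))); apply: hw.
  case: (classic (subid (radi Q0) P)) => hQ0P.
    exfalso; apply: hnm; apply: (min_transfer hP hE).
      by apply: (assoc_sup hM); split => //; exists g.
    move=> y /hg /hMQ /(_ Q0 hQ0) hy; apply: hQ0P.
    by apply: (primary_colon (hQs Q0 hQ0) ng0); rewrite mulrC.
  by apply: hsub0; apply: hz.
exists (z ^+ t).
  by move=> h; apply: nz; apply: (prime_pow hPp h).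
by rewrite mulrC; apply: hf; apply: idpow_elt.
Qed.

Lemma emb_ideal M : is_ideal (emb M).
Proof.
split.
- by move=> P [hP _] _; apply: (id0 (prime_ideal hP)).
- by move=> a b ha hb P hA hn; apply: (idD (prime_ideal hA.1)); [apply: ha|apply: hb].
- by move=> r a ha P hA hn; apply: (idM _ (prime_ideal hA.1)); apply: ha.
Qed.

Lemma list_max (Qs : seq (R -> Prop)) (Pr : (R -> Prop) -> nat -> Prop) :
  (forall Q e e', (e <= e')%N -> Pr Q e -> Pr Q e') ->
  (forall Q, List.In Q Qs -> exists e, Pr Q e) -> exists t, forall Q, List.In Q Qs -> Pr Q t.
Proof.
move=> hmono; elim: Qs => [|Q Qs IH] h; first by exists 0%N.
have [t ht] := IH (fun Q' h' => h Q' (or_intror h')).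
have [e he] := h Q (or_introl erefl).
exists (maxn t e) => Q' [<-|hQ'].
  by apply: (hmono _ e) => //; apply: leq_maxr.
by apply: (hmono _ t); [apply: leq_maxl|apply: ht].
Qed.

Theorem char2 M f : noeth R -> is_ideal M -> Sym M f ->
  exists2 t, (1 <= t)%N & colon M (idpow (emb M) t) f.
Proof.
move=> hN hM hf.
have [Qs0 [hQs0 hMQ0]] := decomp_primary hN hM.
have [Qs [hQs hQQ hirr]] := make_irred (leqnn (size Qs0)) hQs0.
have hMQ : forall x, M x <-> forall Q, List.In Q Qs -> Q x.
  by move=> x; rewrite hMQ0.
have hL := @emb_ideal M.
have key : forall Q, List.In Q Qs -> exists e, forall g, idpow (emb M) e g -> Q (f * g).
  move=> Q hQ; have [l1 [l2 eQs]] := List.in_split _ _ hQ.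
  have hQi := primary_ideal (hQs Q hQ).
  case: (classic (Q f)) => hQf.
    by exists 0%N => g _; apply: (idMr _ hQi).
  have [x [nx hx]] := hirr _ _ _ eQs.
  have hass := comp_assoc hN hMQ (fun Q' h => primary_ideal (hQs Q' h)) (hQs Q hQ) eQs nx hx.
  have hnm : ~ minimal_prime M (radi Q).
    move=> hmin; have [s ns hs] := hf _ hmin; apply: ns.
    by apply: (primary_colon (hQs Q hQ) hQf); move/hMQ: hs; apply.
  have [e he] := rad_pow hN hQi.
  exists e => g hg; apply: (idM _ hQi); apply: he; move: g hg; apply: idpow_mono.
  by move=> y hy; apply: hy.
have [t ht] := list_max (Pr := fun Q e => forall g, idpow (emb M) e g -> Q (f * g))
  (fun Q e e' hee' h g hg => h g (idpow_decn hL hee' hg)) key.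
exists t.+1 => // g hg; apply/hMQ => Q hQ; apply: ht => //.
exact: (idpow_decn hL (leqnSn t)).
Qed.

Lemma Sym_ideal M : is_ideal M -> is_ideal (Sym M).
Proof.
move=> hM; split.
- move=> P [[_ h1 _] _ _]; exists 1 => //; rewrite mulr0; exact: id0.
- move=> a b ha hb P hP; have [s ns hs] := ha P hP; have [s' ns' hs'] := hb P hP.
  exists (s * s').
    by case: hP => -[_ _ hp] _ _ /hp [].
  rewrite mulrDr; apply: (idD hM).
    by rewrite mulrAC; apply: (idMr _ hM).
  by rewrite -mulrA; apply: (idM _ hM).
- move=> r a ha P hP; have [s ns hs] := ha P hP; exists s => //.
  by rewrite mulrCA; apply: (idM _ hM).
Qed.

End Char.


Lemma incr_le (f : nat -> nat) : (forall k, (f k < f k.+1)%N) ->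
  forall a b, (a <= b)%N -> (f a <= f b)%N.
Proof.
move=> hf a b hab; rewrite -(subnK hab); elim: (b - a)%N => [//|d IH].
by rewrite addSn; apply: leq_trans IH (ltnW (hf _)).
Qed.

Lemma incr_lt (f : nat -> nat) : (forall k, (f k < f k.+1)%N) ->
  forall a b, (a < b)%N -> (f a < f b)%N.
Proof. by move=> hf a b hab; apply: leq_trans (hf a) (incr_le hf hab). Qed.

Lemma argmin_tail (u : nat -> nat) p : exists j, (p <= j)%N /\ forall j', (p <= j')%N -> (u j <= u j')%N.
Proof.
suff H : forall v j0, (p <= j0)%N -> (u j0 <= v)%N ->
    exists j, (p <= j)%N /\ forall j', (p <= j')%N -> (u j <= u j')%N.
  by apply: (H (u p) p).
elim=> [|v IH] j0 hj0 hv.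
  by exists j0; split => // j' _; move: hv; rewrite leqn0 => /eqP ->.
case: (classic (exists j1, (p <= j1)%N /\ (u j1 <= v)%N)) => [[j1 [h1 h2]]|hno].
  exact: (IH j1).
exists j0; split => // j' hj'; apply: leq_trans hv _.
by rewrite ltnNge; apply/negP => h; apply: hno; exists j'.
Qed.

Lemma nat_subseq (u : nat -> nat) : exists psi : nat -> nat,
  (forall k, (psi k < psi k.+1)%N) /\ forall a b, (a <= b)%N -> (u (psi a) <= u (psi b))%N.
Proof.
pose am p := proj1_sig (constructive_indefinite_description _ (argmin_tail u p)).
have ham p : (p <= am p)%N /\ forall j', (p <= j')%N -> (u (am p) <= u j')%N.
  exact: (proj2_sig (constructive_indefinite_description _ (argmin_tail u p))).
pose psi := fix psi k := match k with 0%N => am 0%N | k'.+1 => am (psi k').+1 end.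
have hinc : forall k, (psi k < psi k.+1)%N by move=> k; exact: (proj1 (ham (psi k).+1)).
exists psi; split => // a b hab; rewrite -(subnK hab); elim: (b - a)%N => [//|d IH].
apply: leq_trans IH _; rewrite addSn /=.
case: (d + a)%N => [|k].
  by apply: (proj2 (ham 0%N)).
apply: (proj2 (ham (psi k).+1)).
exact: (leq_trans (hinc k) (ltnW (hinc k.+1))).
Qed.

Section Hilbert.
Variables (K : fieldType) (n : nat).
Local Notation S := {mpoly K[n]}.

Lemma dickson_l (s : nat -> 'X_{1..n}) (l : seq 'I_n) : exists phi : nat -> nat,
  (forall k, (phi k < phi k.+1)%N) /\
  forall a b, (a <= b)%N -> forall i, i \in l -> (s (phi a) i <= s (phi b) i)%N.
Proof.
elim: l => [|i0 l [phi [hphi hl]]]; first by exists id.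
have [psi [hpsi hu]] := nat_subseq (fun k => s (phi k) i0).
exists (fun k => phi (psi k)); split.
  by move=> k; apply: incr_lt.
move=> a b hab i; rewrite inE => /orP [/eqP ->|hi]; first exact: hu.
by apply: hl => //; apply: incr_le.
Qed.

Lemma dickson (s : nat -> 'X_{1..n}) : exists i j, (i < j)%N /\ (s i <= s j)%MM.
Proof.
have [phi [hphi hl]] := dickson_l s (enum 'I_n).
exists (phi 0%N), (phi 1%N); split; first exact: hphi.
by apply/mnm_lepP => i; apply: hl => //; rewrite mem_enum.
Qed.

Lemma min_lead (Pp : S -> Prop) f0 : Pp f0 ->
  exists f, Pp f /\ forall g, Pp g -> (mlead f <= mlead g)%O.
Proof.
move: {2}(mlead f0) (erefl (mlead f0)) => m.
elim/(well_founded_ind (@ltom_wf n)): m f0 => m IH f0 hm hf0.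
case: (classic (exists g, Pp g /\ (mlead g < m)%O)) => [[g [hg hlt]]|hno].
  exact: (IH _ hlt g erefl hg).
exists f0; split => // g hg; rewrite hm leNgt; apply/negP => hlt.
by apply: hno; exists g.
Qed.

Theorem hilbert : noeth S.
Proof.
move=> X hX; apply: NNPP => hno.
have step : forall gs : seq S, exists f, (forall g, g \in gs -> X g) ->
    [/\ X f, ~ gen (fun g => g \in gs) f &
     forall g, X g -> ~ gen (fun h => h \in gs) g -> (mlead f <= mlead g)%O].
  move=> gs; case: (classic (forall g, g \in gs -> X g)) => hgs; last by exists 0.
  have [f0 [hf0 nf0]] : exists f, X f /\ ~ gen (fun g => g \in gs) f.
    apply: NNPP => h; apply: hno; exists gs; split => // f hf.
    by apply: NNPP => nf; apply: h; exists f.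
  have [f [[hf nf] hmin]] := @min_lead (fun f => X f /\ ~ gen (fun g => g \in gs) f) f0 (conj hf0 nf0).
  by exists f => _; split => // g hg ng; apply: hmin.
pose nxt gs := proj1_sig (constructive_indefinite_description _ (step gs)).
have hnxt gs := proj2_sig (constructive_indefinite_description _ (step gs)).
pose L := fix L k := match k with 0%N => [::] | k'.+1 => rcons (L k') (nxt (L k')) end.
have hL : forall k g, g \in L k -> X g.
  elim=> [//|k IH] g /=; rewrite mem_rcons inE => /orP [/eqP ->|/IH //].
  by case: (hnxt (L k) IH).
have hmono : forall i j, (i <= j)%N -> forall g, g \in L i -> g \in L j.
  move=> i j hij; rewrite -(subnK hij); elim: (j - i)%N => [//|d IH] g hg.
  by rewrite addSn /= mem_rcons inE IH ?orbT.
pose F k := nxt (L k).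
have hF : forall i j, (i < j)%N -> F i \in L j.
  by move=> i j hij; apply: (hmono i.+1) => //=; rewrite mem_rcons mem_head.
have [i [j [hij hle]]] := dickson (fun k => mlead (F k)).
have [hXj nj hminj] := hnxt (L j) (hL j).
have [hXi ni _] := hnxt (L i) (hL i).
have hgen0 : forall k, gen (fun h => h \in L k) 0 by move=> k; apply: (id0 (gen_ideal _)).
have nzi : F i != 0 by apply/eqP => h; apply: ni; move: (hgen0 i); rewrite -h.
have nzj : F j != 0 by apply/eqP => h; apply: nj; move: (hgen0 j); rewrite -h.
set fi := F i in hle hXi ni nzi hF; set fj := F j in hle hXj nj nzj hminj.
set d := (mlead fj - mlead fi)%MM.
set c := mleadc fj / mleadc fi.
set q := c *: ('X_[d] * fi).
have hci : mleadc fi != 0 by rewrite mleadc_eq0.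
have hcj : mleadc fj != 0 by rewrite mleadc_eq0.
have hcX : mleadc ('X_[d] : S) * mleadc fi != 0.
  by rewrite mleadXm mcoeffX eqxx mul1r.
have hlXf : mlead ('X_[d] * fi) = mlead fj.
  by rewrite (mleadM_proper hcX) mleadXm /d submK.
have hcq : q@_(mlead fj) = mleadc fj.
  have hX1 : ('X_[d] * fi)@_(mlead fj) = mleadc fi.
    by rewrite -hlXf (mleadM_proper hcX) mleadcM mleadXm mcoeffX eqxx mul1r.
  by rewrite /q mcoeffZ hX1 /c divfK.
have hlq : (mlead q <= mlead fj)%O by rewrite -hlXf mleadZ_le.
set g := fj - q.
have hXg : X g.
  apply: (idB hX) => //; rewrite /q -mul_mpolyC mulrA; apply: (idM _ hX).
  exact: hXi.
have ng : ~ gen (fun h => h \in L j) g.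
  move=> hg; apply: nj.
  suff hfj : gen (fun h => h \in L j) fj by exact: hfj.
  have -> : fj = g + q by rewrite /g subrK.
  apply: (idD (gen_ideal _)) => //; rewrite /q -mul_mpolyC mulrA.
  by apply: (idM _ (gen_ideal _)); apply: gen_sub; apply: hF.
have h1 := hminj g hXg ng.
have h2 : (mlead g <= mlead fj)%O.
  by apply: le_trans (mleadB_le _ _) _; rewrite join_l.
have heq : mlead g = mlead fj by apply/le_anti; rewrite h1 h2.
have : mleadc g = 0 by rewrite heq mcoeffB hcq subrr.
move/eqP; rewrite mleadc_eq0 => /eqP hg0; apply: ng; rewrite hg0; exact: hgen0.
Qed.

End Hilbert.


Section PowPrime.
Variable R : comNzRingType.
Implicit Types X Y Z Q P M A B E I : R -> Prop.

Lemma subpow I Q m : is_ideal I -> is_prime Q -> (1 <= m)%N ->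
  (subid (idpow I m) Q <-> subid I Q).
Proof.
move=> hI hQ hm; split.
  by move=> h x hx; apply: (prime_pow (m := m) hQ); apply: h; apply: idpow_elt.
by move=> h x /(idpow_sub1 hI hm) /h.
Qed.

Lemma minpow I m m' P : is_ideal I -> (1 <= m)%N -> (1 <= m')%N ->
  minimal_prime (idpow I m) P -> minimal_prime (idpow I m') P.
Proof.
move=> hI hm hm' [hP hsub hmin]; split => //.
  by apply/(subpow hI hP hm'); apply/(subpow hI hP hm).
move=> Q hQ hsQ; apply: hmin => //.
by apply/(subpow hI hQ hm); apply/(subpow hI hQ hm').
Qed.
End PowPrime.

Section Deriv.
Variables (K : fieldType) (n : nat).
Local Notation S := {mpoly K[n]}.
Implicit Types X I M : S -> Prop.

Lemma deriv_pow X i m : is_ideal X -> forall f, idpow X m.+1 f -> idpow X m (mderiv i f).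
Proof.
move=> hX; elim: m => [|m IH] f hf //.
have hT : subid (idpow X m.+2) (fun f => idpow X m.+2 f /\ idpow X m.+1 (mderiv i f)).
  have hX2 := idpow_ideal X m.+2; have hX1 := idpow_ideal X m.+1.
  apply: gen_min.
  - split.
    + by split; [apply: (id0 hX2)|rewrite mderiv0; apply: (id0 hX1)].
    + move=> a b [ha ha'] [hb hb']; split; first exact: (idD hX2).
      by rewrite mderivD; apply: (idD hX1).
    + move=> r a [ha ha']; split; first exact: (idM _ hX2).
      rewrite mderivM; apply: (idD hX1); apply: (idM _ hX1) => //.
      by apply: (idpow_dec hX).
  - move=> h [a [b [ha hb ->]]]; split; first exact: idmulP.
    rewrite mderivM; apply: (idD hX1).
      by apply: (idM _ hX1).
    by apply: idmulP => //; apply: IH.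
by case: (hT f hf).
Qed.

Lemma sym_deriv I m i f : is_ideal I -> Sym (idpow I m.+2) f ->
  Sym (idpow I m.+1) (mderiv i f).
Proof.
move=> hI hf P hP.
have [s ns hs] := hf P (minpow hI (isT : (1 <= m.+1)%N) (isT : (1 <= m.+2)%N) hP).
have hPp : is_prime P by case: hP.
have hX1 := idpow_ideal I m.+1.
exists (s * s).
  by case: hPp => _ _ hp /hp [].
have -> : s * s * mderiv i f = s * mderiv i (s * f) - (s * f) * mderiv i s.
  by rewrite mderivM mulrDr; ring.
apply: (idB hX1).
  by apply: (idM _ hX1); apply: deriv_pow.
by apply: (idMr _ hX1); apply: (idpow_dec hI).
Qed.

Theorem main_noeth (a : 'I_n -> nat)
  (I : {mpoly K[n]} -> Prop) (hI : homog_ideal a I) (k : nat) (hk : (2 <= k)%N)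
  (hsq : subid (idpow (symbolic_power I k.-1) 2) (idpow I k)) :
  noeth {mpoly K[n]} ->
  forall J : {mpoly K[n]} -> Prop,
    subid (idpow I k) J -> subid J (symbolic_power I k) ->
    strongly_golod J.
Proof.
move=> hN J hIJ hJs.
have hIi : is_ideal I by case: hI.
case: k hk hsq hIJ hJs => [|[|m]] // _ hsq hIJ hJs.
have hder : subid (deriv_ideal J) (Sym (idpow I m.+1)).
  apply: gen_min; first exact: Sym_ideal (idpow_ideal I m.+1).
  move=> h [f [i [hf ->]]]; apply: sym_deriv => //.
  exact: (char1 hN (idpow_ideal I m.+2) (hJs f hf)).
move=> x hx; apply: hIJ; apply: hsq; move: x hx; apply: idpow_mono.
move=> y /hder hy; exact: (char2 hN (idpow_ideal I m.+1) hy).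
Qed.

End Deriv.


Theorem theorem2p5 (K : fieldType) (hK : [pchar K]%R =i pred0) (n : nat)
  (a : 'I_n -> nat) (ha : forall i, (0 < a i)%N)
  (I : {mpoly K[n]} -> Prop) (hI : homog_ideal a I) (k : nat) (hk : (2 <= k)%N)
  (hsq : subid (idpow (symbolic_power I k.-1) 2) (idpow I k)) :
  forall J : {mpoly K[n]} -> Prop, homog_ideal a J ->
    subid (idpow I k) J -> subid J (symbolic_power I k) ->
    strongly_golod J.
Proof.
move=> J _ hIJ hJs.
exact: (main_noeth hI hk hsq (@hilbert K n) hIJ hJs).
Qed.
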